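(* Let $x\in\Sigma^*$ be a word and let $Y\subseteq\Sigma^*$ be a nonempty language recognized by a nondeterministic finite automaton with $n$ states. Then there exists $y_x\in Y$ with $\mathrm{ned}(x,y_x)=\inf_{y\in Y}\mathrm{ned}(x,y)$, and moreover there exists an edit path $p$ from $x$ to $y_x$ with $\mathrm{wgt}(p)/|p|=\mathrm{ned}(x,y_x)$ and $|p|\le n(|x|+1)$.
   Context: $\Sigma$ is a finite alphabet. An edit path from $x$ to $y$ is a sequence $p=(a_1,b_1)\cdots(a_n,b_n)$ with $(a_i,b_i)\in(\Sigma\cup\{\varepsilon\})^2\setminus\{(\varepsilon,\varepsilon)\}$, $a_1\cdots a_n=x$, $b_1\cdots b_n=y$; $|p|=n$ and $\mathrm{wgt}(p)=|\{i:a_i\ne b_i\}|$. $\mathrm{ned}(x,y)=\min_p\mathrm{wgt}(p)/|p|$ over edit paths from $x$ to $y$ ($\mathrm{ned}(\varepsilon,\varepsilon)=0$). *)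

(* Defs.v *)
From HB Require Import structures.
From mathcomp Require Import all_boot all_order all_algebra.
From mathcomp Require Import boolp classical_sets reals.
Set Implicit Arguments. Unset Strict Implicit. Unset Printing Implicit Defensive.
Import Order.TTheory GRing.Theory Num.Theory.
Local Open Scope ring_scope.
Local Open Scope classical_set_scope.

Section EditDistance.
Variable Sigma : finType.

(* An edit operation (a,b) with a,b in Sigma ∪ {ε}; None encodes ε. *)
Definition edit_op := (option Sigma * option Sigma)%type.

Definition src (p : seq edit_op) : seq Sigma := pmap fst p.
Definition tgt (p : seq edit_op) : seq Sigma := pmap snd p.

Definition is_edit_path (x y : seq Sigma) (p : seq edit_op) : Prop :=
  all (fun e : edit_op => e != (None, None)) p /\ src p = x /\ tgt p = y.

Definition wgt (p : seq edit_op) : nat := count (fun e : edit_op => e.1 != e.2) p.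

Definition path_ratio {R : realType} (p : seq edit_op) : R := (wgt p)%:R / (size p)%:R.

Definition ned {R : realType} (x y : seq Sigma) : R :=
  if (x == [::]) && (y == [::]) then 0
  else inf [set path_ratio p | p in [set p | is_edit_path x y p]].

Definition nfa_reach (S : finType) (I : {set S}) (delta : S -> Sigma -> {set S})
  (w : seq Sigma) : {set S} :=
  foldl (fun (Q : {set S}) a => (\bigcup_(q in Q) delta q a)%SET) I w.

Definition nfa_accepts (S : finType) (I F : {set S}) (delta : S -> Sigma -> {set S})
  (w : seq Sigma) : bool :=
  [exists q in nfa_reach I delta w, q \in F].

End EditDistance.

(* Main.v *)
Require Import Defs.
From HB Require Import structures.
From mathcomp Require Import all_boot all_order all_algebra.
From mathcomp Require Import boolp classical_sets reals.
From mathcomp Require Import zify.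
Import Order.TTheory GRing.Theory Num.Theory.
Local Open Scope ring_scope.
Local Open Scope classical_set_scope.
Set Implicit Arguments. Unset Strict Implicit.

Fixpoint seqs_upto (T : finType) (k : nat) : seq (seq T) :=
  match k with
  | 0 => [:: [::]]
  | k'.+1 => [::] :: [seq a :: s | a <- enum T, s <- seqs_upto T k']
  end.

Lemma seqs_uptoP (T : finType) k (s : seq T) : (size s <= k)%N -> s \in seqs_upto T k.
Proof.
elim: k s => [|k IH] [|a s] //= hs; rewrite ?inE ?eqxx //.
 apply/orP; right; apply: allpairs_f; first by rewrite mem_enum.
exact: IH.
Qed.

Lemma list_min (R : realType) (T : eqType) (L : seq T) (P : T -> Prop) (f : T -> R) :
  (exists s, s \in L /\ P s) ->
  exists m, [/\ m \in L, P m & forall s, s \in L -> P s -> f m <= f s].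
Proof.
elim: L => [|a L IH] [s [Hs Ps]]; first by [].
case: (pselect (exists s, s \in L /\ P s)) => [/IH [m [mL Pm Hm]]|Hn].
  case: (pselect (P a)) => Pa.
    case: (leP (f a) (f m)) => h.
      exists a; split => //; first by rewrite inE eqxx.
      move=> t; rewrite inE => /orP [/eqP -> //| tL] Pt.
      exact: le_trans h (Hm _ tL Pt).
    exists m; split => //; first by rewrite inE mL orbT.
    move=> t; rewrite inE => /orP [/eqP -> | tL] Pt; first exact: ltW.
    exact: Hm.
  exists m; split => //; first by rewrite inE mL orbT.
  by move=> t; rewrite inE => /orP [/eqP -> //| tL] Pt; apply: Hm.
move: Hs; rewrite inE => /orP [/eqP Esa| sL]; last by exfalso; apply: Hn; exists s.
subst s; exists a; split => //; first by rewrite inE eqxx.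
move=> t; rewrite inE => /orP [/eqP -> //| tL] Pt.
by exfalso; apply: Hn; exists t.
Qed.

Lemma inf_attained (R : realType) (E : set R) m :
  E m -> (forall y, E y -> m <= y) -> inf E = m.
Proof.
move=> Em lb; apply/le_anti/andP; split.
  by apply: (ge_inf (E := E)) => //; exists m => y Ey; exact: lb.
by apply: lb_le_inf; [exists m | move=> y Ey; exact: lb].
Qed.

Lemma ratio_le (R : realType) (a b k : nat) : (a <= b)%N ->
  (a%:R / b%:R : R) <= (a + k)%:R / (b + k)%:R.
Proof.
move=> ab; case: b ab => [|b] ab.
  have -> : a = 0%N by lia.
  by rewrite mul0r divr_ge0.
rewrite ler_pdivrMr ?ltr0n // mulrAC ler_pdivlMr ?ltr0n ?addnS //.
rewrite -!natrM ler_nat; nia.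
Qed.
Section Edit.
Variable Sigma : finType.
Local Notation eop := (edit_op Sigma).

Lemma src_cat (p q : seq eop) : src (p ++ q) = src p ++ src q.
Proof. exact: pmap_cat. Qed.
Lemma tgt_cat (p q : seq eop) : tgt (p ++ q) = tgt p ++ tgt q.
Proof. exact: pmap_cat. Qed.

Lemma size_path_bound (p : seq eop) :
  all (fun e : eop => e != (None, None)) p ->
  (size p <= size (src p) + size (tgt p))%N.
Proof.
elim: p => [|e p IH] //= H; case/andP: H => ne H.
have := IH H; case: e ne => [[a|] [b|]] ne //=; rewrite /src /tgt /=; lia.
Qed.

Definition triv (x y : seq Sigma) : seq eop :=
  map (fun a => (Some a, None)) x ++ map (fun b => (None, Some b)) y.

Lemma triv_path x y : is_edit_path x y (triv x y).
Proof.
rewrite /is_edit_path /triv src_cat tgt_cat all_cat !all_map; split.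
  by apply/andP; split; apply/allP.
split.
  have -> : src [seq (None, Some b) | b <- y] = [::] :> seq Sigma by elim: y.
  by rewrite cats0; elim: x => //= a x; rewrite /src /= => ->.
have -> : tgt [seq (Some a, None) | a <- x] = [::] :> seq Sigma by elim: x.
by elim: y => //= b y; rewrite /tgt /= => ->.
Qed.

Lemma wgt_ins (p : seq eop) : src p = [::] ->
  all (fun e : eop => e != (None, None)) p -> wgt p = size p.
Proof.
elim: p => [|e p IH] //= hs H; case/andP: H => ne H.
case: e ne hs => [[a|] [b|]] ne //= hs; rewrite /wgt /= -/(wgt p) IH //.
Qed.

Lemma size_src_take (p : seq eop) k : (size (src (take k p)) <= size (src p))%N.
Proof.
by rewrite -{2}(cat_take_drop k p) src_cat size_cat leq_addr.
Qed.

Variable S : finType.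
Variables I F : {set S}.
Variable delta : S -> Sigma -> {set S}.

Lemma reach_split (Q : {set S}) v q' :
  q' \in nfa_reach Q delta v <-> exists2 q, q \in Q & q' \in nfa_reach [set q] delta v.
Proof.
elim: v Q => [|a v IH] Q /=.
  rewrite /nfa_reach /=; split; first by move=> h; exists q'; rewrite ?inE.
  by case=> q qQ; rewrite inE => /eqP ->.
rewrite /nfa_reach /= -/(nfa_reach _ _ v) IH; split.
  case=> r /bigcupP [q qQ rq] hr; exists q => //.
  by rewrite /nfa_reach /= -/(nfa_reach _ _ v) big_set1 IH; exists r.
case=> q qQ; rewrite /nfa_reach /= -/(nfa_reach _ _ v) big_set1 IH.
by case=> r rq hr; exists r => //; apply/bigcupP; exists q.
Qed.

Lemma reach_cat (u v : seq Sigma) q' :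
  q' \in nfa_reach I delta (u ++ v) <->
  exists2 q, q \in nfa_reach I delta u & q' \in nfa_reach [set q] delta v.
Proof. by rewrite /nfa_reach foldl_cat -/(nfa_reach _ _ v) reach_split. Qed.

End Edit.

Lemma nat_aux a b c k : (a + (b + c) <= k.+1 -> 0 < b -> a + c <= k)%N.
Proof. lia. Qed.

Section Pump.
Variable R : realType.
Variable Sigma : finType.
Local Notation eop := (edit_op Sigma).
Variable S : finType.
Variables I F : {set S}.
Variable delta : S -> Sigma -> {set S}.

Lemma pump (p : seq eop) : nfa_accepts I F delta (tgt p) ->
  (#|S| * (size (src p) + 1) <= size p)%N ->
  exists p1 p2 p3, [/\ p = p1 ++ p2 ++ p3, p2 != [::], src p2 = [::] &
     nfa_accepts I F delta (tgt (p1 ++ p3))].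
Proof.
move=> /exists_inP [qf hqf qfF] hN.
have hq : forall k : 'I_(size p).+1, exists q, q \in nfa_reach I delta (tgt (take k p)) /\
    qf \in nfa_reach [set q] delta (tgt (drop k p)).
  move=> k; move: hqf; rewrite -{1}(cat_take_drop k p) tgt_cat => /reach_cat [q h1 h2].
  by exists q.
have [fq hfq] := choice hq.
pose g (k : 'I_(size p).+1) : ('I_(size (src p)).+1 * S)%type :=
  (inord (size (src (take k p))), fq k).
have [[k1 [k2 [e ne]]] | Hn] := pselect (exists k1 k2, g k1 = g k2 /\ k1 != k2); last first.
  exfalso.
  have inj : injective g.
    move=> k1 k2 e; apply/eqP; apply/negP => ne; apply: Hn; exists k1, k2; split => //.
    by apply/negP.
  have := @leq_card _ _ g inj; rewrite card_prod !card_ord; nia.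
wlog lt12 : k1 k2 e ne / (k1 < k2)%N.
  move=> W; case: (ltngtP k1 k2) => h.
  - exact: (W k1 k2 e ne h).
  - exact: (W k2 k1 (esym e) ltac:(by rewrite eq_sym) h).
  - by rewrite (ord_inj h) eqxx in ne.
move: e; rewrite /g => -[es eq_q].
have es' : size (src (take k1 p)) = size (src (take k2 p)).
  by move/(congr1 val): es; rewrite /= !inordK // ltnS size_src_take.
have htake : take k2 p = take k1 p ++ take (k2 - k1) (drop k1 p).
  by rewrite -takeD subnKC // ltnW.
have hsrc2 : src (take (k2 - k1) (drop k1 p)) = [::].
  by apply/size0nil; move: es'; rewrite htake src_cat size_cat; lia.
have hk2 := ltn_ord k2.
exists (take k1 p), (take (k2 - k1) (drop k1 p)), (drop k2 p); split => //.
- by rewrite catA -htake cat_take_drop.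
- rewrite -size_eq0 size_takel; first by rewrite subn_eq0 -ltnNge.
  by rewrite size_drop leq_sub2r.

apply/exists_inP; exists qf => //; rewrite tgt_cat; apply/reach_cat; exists (fq k1).
  exact: (hfq k1).1.
by rewrite eq_q; exact: (hfq k2).2.
Qed.

Lemma shorten k : forall (p : seq eop), (size p <= k)%N ->
  all (fun e : eop => e != (None, None)) p -> nfa_accepts I F delta (tgt p) ->
  exists p', [/\ all (fun e : eop => e != (None, None)) p', src p' = src p,
     nfa_accepts I F delta (tgt p'), (size p' <= #|S| * (size (src p) + 1))%N &
     (path_ratio p' : R) <= path_ratio p].
Proof.
elim: k => [|k IH] p hk hall hacc.
  by exists p; split => //; move: hk; rewrite leqn0 => /eqP ->.
case: (leqP (size p) (#|S| * (size (src p) + 1))) => hs.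
  by exists p; split.
have [p1 [p2 [p3 [Ep ne2 hs2 hacc']]]] := pump hacc (ltnW hs).
have hall' := hall; rewrite Ep !all_cat in hall'; case/and3P: hall' => a1 a2 a3.
have hsrc : src (p1 ++ p3) = src p by rewrite Ep !src_cat hs2.
have hsz : (size (p1 ++ p3) <= k)%N.
  move: hk ne2; rewrite Ep !size_cat -size_eq0 -lt0n; apply: nat_aux.
have [p'' [b1 b2 b3 b4 b5]] := IH _ hsz ltac:(by rewrite all_cat a1 a3) hacc'.
exists p''; split => //; rewrite -?hsrc //.
apply: (le_trans b5).
have wp : wgt p = (wgt (p1 ++ p3) + size p2)%N.
  by rewrite Ep /wgt !count_cat; have := wgt_ins hs2 a2; rewrite /wgt; lia.
have sp : size p = (size (p1 ++ p3) + size p2)%N by rewrite Ep !size_cat; lia.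
rewrite /path_ratio wp sp; apply: ratio_le; exact: count_size.
Qed.

Lemma ned_char (x y : seq Sigma) : exists m, [/\ is_edit_path x y m,
   (ned x y : R) = path_ratio m &
   forall q, is_edit_path x y q -> (path_ratio m : R) <= path_ratio q].
Proof.
have bound : forall q, is_edit_path x y q -> q \in seqs_upto eop (size x + size y).
  move=> q [h1 [h2 h3]]; apply: seqs_uptoP; rewrite -h2 -h3; exact: size_path_bound.
have [m [mL Pm Hm]] := @list_min R _ (seqs_upto eop (size x + size y)) (is_edit_path x y) (fun q => (path_ratio q : R))
  (ex_intro _ (triv x y) (conj (bound _ (triv_path x y)) (triv_path x y))).
exists m; split => //; last by move=> q hq; apply: Hm => //; apply: bound.
rewrite /ned; case: ifP => [/andP [/eqP ex /eqP ey] | _].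
  have sm : size m = 0%N.
    case: Pm => h1 [h2 h3]; by have := size_path_bound h1; rewrite h2 h3 ex ey /= leqn0 => /eqP.
  by move/size0nil: sm => ->; rewrite /path_ratio /= mul0r.
apply: inf_attained; first by exists m.
by move=> r [q hq <-]; apply: Hm => //; apply: bound.
Qed.

End Pump.

Theorem mainTheorem14 (R : realType) (Sigma : finType) (x : seq Sigma)
  (Y : set (seq Sigma)) (n : nat) (S : finType) (I F : {set S})
  (delta : S -> Sigma -> {set S}) :
  #|S| = n ->
  Y = [set w | nfa_accepts I F delta w] ->
  Y !=set0 ->
  exists2 yx, Y yx &
    ((ned x yx : R) = inf [set (ned x y : R) | y in Y] /\
     exists p, [/\ is_edit_path x yx p,
                   (path_ratio p : R) = (ned x yx : R) &
                   (size p <= n * (size x + 1))%N]).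
Proof.
move=> hn hY [y0 Yy0]; subst n.
set N := (#|S| * (size x + 1))%N.
pose P := fun p : seq (edit_op Sigma) =>
  [/\ is_edit_path x (tgt p) p, nfa_accepts I F delta (tgt p) & (size p <= N)%N].
have acc : forall y, Y y -> nfa_accepts I F delta y by move=> y; rewrite hY.
have inL : forall p, P p -> p \in seqs_upto _ N by move=> p [_ _ h]; exact: seqs_uptoP.
have shortP : forall p, is_edit_path x (tgt p) p -> nfa_accepts I F delta (tgt p) ->
    exists p', P p' /\ (path_ratio p' : R) <= path_ratio p.
  move=> p [h1 [h2 _]] ha.
  have [p' [b1 b2 b3 b4 b5]] := @shorten R Sigma S I F delta (size p) p (leqnn _) h1 ha.
  exists p'; split => //; split => //.
    by split => //; rewrite b2.
  by rewrite /N -h2.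
have [_ [hs0 ht0]] := triv_path x y0.
have [p0 [P0 _]] := shortP (triv x y0) ltac:(by rewrite ht0; exact: triv_path)
  ltac:(by rewrite ht0; exact: acc).
have [ps [_ Pps Hps]] := @list_min R _ (seqs_upto _ N) P (fun p => path_ratio p : R)
  (ex_intro _ p0 (conj (inL _ P0) P0)).
case: (Pps) => Eps Aps Sps.
have C1 : forall y, Y y -> (path_ratio ps : R) <= ned x y.
  move=> y Yy; have [m [Em -> _]] := @ned_char R Sigma x y.
  have [_ [_ ty]] := Em.
  have [p' [Pp' le']] := shortP m ltac:(by rewrite ty) ltac:(by rewrite ty; exact: acc).
  apply: (le_trans _ le'); exact: (Hps _ (inL _ Pp') Pp').
have Yps : Y (tgt ps) by rewrite hY.
have C2 : (ned x (tgt ps) : R) = path_ratio ps.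
  have [m [Em Enm Hm]] := @ned_char R Sigma x (tgt ps).
  apply/le_anti/andP; split; last exact: C1.
  by rewrite Enm; exact: Hm.
exists (tgt ps) => //.
split.
  rewrite C2; symmetry; apply: inf_attained; first by exists (tgt ps).
  by move=> r [y Yy <-]; exact: C1.
by exists ps; split => //; rewrite C2.
Qed.
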